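(* Assume $r_0\ge0$ and $\mathbb P\{t(e)=r_0\}<p_c$. Let $\delta>0$ be a constant for which there exist $C,c_1>0$ such that for all $n\in\mathbb N$, $$\mathbb P\Big\{\exists\text{ self-avoiding path }\gamma\text{ from }0\text{ with }|\gamma|\ge n\text{ and }\sum_{e\in\gamma}(t(e)-r_0)\le\delta|\gamma|\Big\}\le Ce^{-c_1n}.$$ Then there exists $s>0$ such that $\mathbb E[e^{sA^{(b)}}]<\infty$ for all $b\ge-r_0-\delta$, where $A^{(b)}=2\sup_{x\in\mathbb Z^d}(T^{(b)}_{0,x})^-$.
   Context: Let $d\ge2$. The weights $\{t(e)\}$ on the undirected nearest-neighbor edges of $\mathbb Z^d$ are i.i.d. real. Set $r_0=\operatorname{ess\,inf}t(e)$, and let $p_c$ be the Bernoulli bond percolation threshold on $\mathbb Z^d$. $|\gamma|$ is the number of edges of a path $\gamma$. $T^{(b)}_{0,x}$ is the infimum of $\sum_{e\in\pi}(t(e)+b)$ over self-avoiding nearest-neighbor paths $\pi$ from $0$ to $x$. For a real $s$, $s^-=(-s)\vee0$. *)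

(* Defs.v *)
From HB Require Import structures.
From mathcomp Require Import all_boot all_order all_algebra.
From mathcomp Require Import all_classical all_reals all_analysis ess_sup_inf.
Set Implicit Arguments. Unset Strict Implicit. Unset Printing Implicit Defensive.
Import Order.TTheory GRing.Theory Num.Theory.
Import numFieldNormedType.Exports.
Local Open Scope classical_set_scope.
Local Open Scope ring_scope.

Definition vtx (d : nat) := 'rV[int]_d.
Definition origin (d : nat) : vtx d := 0.
Definition unitv (d : nat) (i : 'I_d) : vtx d := delta_mx 0 i.
(** Undirected nearest-neighbour edges of Z^d: the pair (x, i) is the edge
    {x, x + e_i}; every undirected edge has exactly one such representation. *)
Definition edge (d : nat) := (vtx d * 'I_d)%type.
(** A step of a nearest-neighbour path: a direction i and a sign
    (true = +e_i, false = -e_i). *)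
Definition step (d : nat) := ('I_d * bool)%type.

Definition move d (x : vtx d) (st : step d) : vtx d :=
  if st.2 then x + unitv st.1 else x - unitv st.1.

Definition step_edge d (x : vtx d) (st : step d) : edge d :=
  if st.2 then (x, st.1) else (x - unitv st.1, st.1).

(** A nearest-neighbour path started at x is encoded by its list of steps s;
    its vertex sequence is [traj x s], it has |gamma| = size s edges, and
    it ends at [endpt x s]. *)
Definition traj d (x : vtx d) (s : seq (step d)) : seq (vtx d) :=
  x :: scanl (@move d) x s.
Definition endpt d (x : vtx d) (s : seq (step d)) : vtx d :=
  foldl (@move d) x s.
Definition self_avoiding d (x : vtx d) (s : seq (step d)) : bool :=
  uniq (traj x s).

Fixpoint psum d (R : realType) (w : edge d -> R) (x : vtx d) (s : seq (step d)) : R :=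
  match s with
  | [::] => 0
  | st :: s' => w (step_edge x st) + psum w (move x st) s'
  end.

Fixpoint path_all d (P : edge d -> Prop) (x : vtx d) (s : seq (step d)) : Prop :=
  match s with
  | [::] => True
  | st :: s' => P (step_edge x st) /\ path_all P (move x st) s'
  end.

Definition indep_events (R : realType) (dT : measure_display) (T : measurableType dT)
  (P : probability T R) (I : eqType) (A : I -> set T) : Prop :=
  forall J : seq I, uniq J ->
    P (\bigcap_(i in [set i | i \in J]) A i) = (\prod_(i <- J) fine (P (A i)))%:E.

Definition indep_rvs (R : realType) (dT : measure_display) (T : measurableType dT)
  (P : probability T R) (I : eqType) (X : I -> T -> R) : Prop :=
  forall (B : I -> set R), (forall i, measurable (B i)) ->
    indep_events P (fun i => X i @^-1` B i).

Definition iid (R : realType) (dT : measure_display) (T : measurableType dT)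
  (P : probability T R) (I : eqType) (X : I -> T -> R) : Prop :=
  (forall i, measurable_fun setT (X i)) /\
  indep_rvs P X /\
  (forall i j (B : set R), measurable B -> P (X i @^-1` B) = P (X j @^-1` B)).

Definition open_cluster d (open : edge d -> Prop) : set (vtx d) :=
  [set x | exists s : seq (step d), path_all open 0 s /\ endpt 0 s = x].

Definition bond_subcritical (R : realType) (d : nat) (p : R) : Prop :=
  forall (dT : measure_display) (T : measurableType dT) (P : probability T R)
         (O : edge d -> set T),
    (forall e, measurable (O e)) -> (forall e, P (O e) = p%:E) ->
    indep_events P O ->
    P [set w | ~ finite_set (open_cluster (fun e => O e w))] = 0%E.

Definition p_c (R : realType) (d : nat) : R :=
  sup [set p : R | 0 <= p <= 1 /\ bond_subcritical d p].

Definition passage_time d (R : realType) (t : edge d -> R) (b : R) (x : vtx d) : \bar R :=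
  ereal_inf [set (psum (fun e => t e + b) 0 s)%:E |
              s in [set s : seq (step d) | self_avoiding 0 s /\ endpt 0 s = x]].

Definition eneg (R : realType) (y : \bar R) : \bar R := Order.max (- y)%E 0%E.

Definition A_b d (R : realType) (t : edge d -> R) (b : R) : \bar R :=
  (2%:E * ereal_sup [set eneg (passage_time t b x) | x in [set: vtx d]])%E.

(* Main.v *)
Require Import Defs.
From HB Require Import structures.
From mathcomp Require Import all_boot all_order all_algebra.
From mathcomp Require Import all_classical all_reals all_analysis ess_sup_inf.
From mathcomp Require Import lra ring.
Import Order.TTheory GRing.Theory Num.Theory.
Import numFieldNormedType.Exports.
Local Open Scope classical_set_scope.
Local Open Scope ring_scope.

Lemma psum_addc d (R : realType) (f : edge d -> R) c (x : vtx d) s :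
  psum (fun e => f e + c) x s = psum f x s + c * (size s)%:R.
Proof.
elim: s x => [|st s IH] x /=; first by rewrite mulr0 addr0.
by rewrite IH -addn1 natrD mulrDr mulr1; lra.
Qed.

Lemma psum_ge0 d (R : realType) (f : edge d -> R) (x : vtx d) s :
  (forall e, 0 <= f e) -> 0 <= psum f x s.
Proof.
move=> f0; elim: s x => [|st s IH] x /=; first by [].
by rewrite addr_ge0.
Qed.

Lemma psum_meas d (R : realType) dT (T : measurableType dT)
  (F : T -> edge d -> R) (x : vtx d) s :
  (forall e, measurable_fun setT (fun w => F w e)) ->
  measurable_fun setT (fun w => psum (F w) x s).
Proof.
move=> mF; elim: s x => [|st s IH] x /=; first exact: measurable_cst.
exact: measurable_realfun.measurable_funD.
Qed.

Lemma int_mono dT (T : measurableType dT) (R : realType) (mu : {measure set T -> \bar R})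
  (f g : T -> \bar R) :
  (forall x, (0 <= f x)%E) -> (forall x, (f x <= g x)%E) ->
  (\int[mu]_x f x <= \int[mu]_x g x)%E.
Proof.
move=> f0 fg.
have g0 : forall x, (0 <= g x)%E by move=> x; exact: le_trans (f0 x) (fg x).
rewrite !ge0_integralE //= !patch_setT.
apply: le_ereal_sup => y [h hf <-]; exists h => //= x.
exact: le_trans (hf x) (fg x).
Qed.

Theorem lemmaA3 (R : realType) (d : nat) (dT : measure_display)
  (T : measurableType dT) (P : probability T R) (t : edge d -> T -> R)
  (r0 delta : R) :
  (2 <= d)%N ->
  iid P t ->
  (forall e, ess_inf P (fun w => (t e w)%:E) = r0%:E) ->
  0 <= r0 ->
  (forall e, P (t e @^-1` [set r0]) < (p_c R d)%:E)%E ->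
  0 < delta ->
  (exists C c1 : R, 0 < C /\ 0 < c1 /\
     forall n : nat,
       (P [set w | exists s : seq (step d),
                     self_avoiding (origin d) s /\ (n <= size s)%N /\
                     (psum (fun e => t e w - r0) (origin d) s <= delta * (size s)%:R)%R]
        <= (C * expR (- (c1 * n%:R)))%R%:E)%E) ->
  exists s : R, 0 < s /\
    forall b : R, - r0 - delta <= b ->
      (\int[P]_w expeR (s%:E * A_b (fun e => t e w) b) < +oo)%E.
Proof.
move=> _ [mt _] einf _ _ d0 [C [c1 [C0 [c10 HE]]]].
pose E n := [set w : T | exists s : seq (step d),
                     self_avoiding (origin d) s /\ (n <= size s)%N /\
                     (psum (fun e => t e w - r0) (origin d) s <= delta * (size s)%:R)%R].
have mtr : forall e, measurable_fun setT (fun w => t e w - r0).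
  move=> e; exact: (measurable_realfun.measurable_funD (mt e) (measurable_cst (- r0))).
have mE : forall n, measurable (E n).
  move=> n.
  pose G (s : seq (step d)) := [set w : T | self_avoiding (origin d) s /\ (n <= size s)%N /\
                     (psum (fun e => t e w - r0) (origin d) s <= delta * (size s)%:R)%R].
  have -> : E n = \bigcup_s G s.
    by apply/seteqP; split => w /= [s]; [move=> h; exists s|move=> _ h; exists s].
  apply: countable_bigcupT_measurable; first exact: countableP.
  move=> s.
  case: (pselect (self_avoiding (origin d) s /\ (n <= size s)%N)) => [[h1 h2]|h].
    have -> : G s = setT `&` (fun w => psum (fun e => t e w - r0) (origin d) s) @^-1`
                  `]-oo, delta * (size s)%:R].
      apply/seteqP; split => w /=.
        by move=> [_ [_ H]]; split => //; rewrite /= in_itv /=.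
      by move=> [_ H]; split => //; split => //; move: H; rewrite /= in_itv /=.
    have := @psum_meas d R dT T (fun w e => t e w - r0) (origin d) s mtr.
    by apply; [exact: measurableT | exact: measurable_itv].
  have -> : G s = set0.
    by apply/seteqP; split => w //= [h1 [h2 _]]; exfalso; apply: h.
  exact: measurable0.
have ae1 : \forall w \ae P, forall n : nat,
    match (unpickle n : option (edge d)) with Some e => is_true (r0 <= t e w) | None => True end.
  apply: ae_foralln => n.
  case: (unpickle n : option (edge d)) => [e|].
    have := ess_inf_le P (fun w => (t e w)%:E); rewrite einf.
    by apply: filterS => w; rewrite lee_fin.
  exists set0; split.
  - exact: measurable0.
  - by rewrite measure0.
  - by move=> w /= /(_ I).
have [N [mN PN0 NN]] := ae1.
have goodw : forall w, ~ N w -> forall e, r0 <= t e w.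
  move=> w Nw e; apply: contra_notP Nw => h; apply: NN => /= H; apply: h.
  by have := H (pickle e); rewrite pickleK.
pose F n := E n `|` N.
have mF : forall n, measurable (F n) by move=> n; exact: measurableU.
have PF : forall n, (P (F n) <= (C * expR (- (c1 * n%:R)))%:E)%E.
  by move=> n; rewrite /F measureU0 //; exact: HE.
pose ka := c1 / 2.
have ka0 : 0 < ka by rewrite /ka divr_gt0.
pose sc := c1 / (4 * delta).
have sc0 : 0 < sc by rewrite /sc divr_gt0 // mulr_gt0.
exists sc; split => // b hb.
pose kk n := expR (ka * n.+1%:R).
pose h w := (\sum_(n <oo) ((kk n * \1_(F n) w)%:E))%E.
have term0 : forall n w, (0 <= (kk n * \1_(F n) w)%:E)%E.
  by move=> n w; rewrite lee_fin mulr_ge0 ?expR_ge0 // indicE ler0n.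
have H1 : forall w n, F n w -> ((kk n)%:E <= h w)%E.
  move=> w n Fw; apply: le_trans (nneseries_lim_ge n.+1 _); last by move=> m _ _; exact: term0.
  rewrite big_nat_recr //= indicE mem_set // mulr1.
  by apply: lee_paddl => //; apply: sume_ge0 => m _; exact: term0.
have H2 : forall w, (forall n, F n w) -> h w = +oo%E.
  move=> w allF.
  have hge : forall n, ((1 + ka * n.+1%:R)%:E <= h w)%E.
    by move=> n; apply: le_trans (H1 w n (allF n)); rewrite lee_fin expR_ge1Dx.
  case hw: (h w) => [r| |] //.
    exfalso; have := hge (Num.trunc (r / ka)); rewrite hw lee_fin.
    have := truncnS_gt (r / ka); rewrite ltr_pdivrMr // => H.
    lra.
  by have := hge 0%N; rewrite hw.
have H4 : forall w, E 0%N w.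
  by move=> w; exists [::]; split => //; split => //=; rewrite mulr0.
pose f w := expeR (sc%:E * A_b (fun e => t e w) b).
have H3 : forall w n, ~ N w -> ~ E n w -> (f w <= (expR (ka * n%:R))%:E)%E.
  move=> w n Nw nE.
  have Hsup : (ereal_sup [set eneg (passage_time (fun e => t e w) b x) | x in [set: vtx d]]
               <= (delta * n%:R)%:E)%E.
    apply: ge_ereal_sup => _ [x _ <-].
    rewrite /eneg ge_max; apply/andP; split; last by rewrite lee_fin mulr_ge0 // ltW.
    rewrite leeNl -EFinN; apply: le_ereal_inf_tmp => _ [p [sap ep] <-].
    rewrite lee_fin leNgt; apply/negP => hlt; apply: nE; exists p.
    have eq1 : psum (fun e => t e w + b) 0 p =
               psum (fun e => t e w - r0) 0 p + (r0 + b) * (size p)%:R.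
      rewrite -psum_addc; congr psum; apply: funext => e; ring.
    have q0 : 0 <= psum (fun e => t e w - r0) 0 p.
      by apply: psum_ge0 => e; rewrite subr_ge0; exact: goodw.
    move: hlt; rewrite eq1.
    set q := psum _ _ _ in q0 *; set k := (size p)%:R => hlt.
    have k0 : 0 <= k by rewrite /k ler0n.
    have hrb : 0 <= r0 + b + delta by lra.
    have hkk : 0 <= (r0 + b + delta) * k by rewrite mulr_ge0.
    have hn0 : 0 <= n%:R :> R by rewrite ler0n.
    have hdn : 0 <= delta * n%:R by rewrite mulr_ge0 // ltW.
    have e2 : (r0 + b + delta) * k = (r0 + b) * k + delta * k by ring.
    have hq : q < delta * k - delta * n%:R by lra.
    split; first exact: sap.
    split; last by lra.
    have hnk : n%:R < k.
      rewrite ltNge; apply/negP => hkn.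
      have : delta * k <= delta * n%:R by rewrite ler_pM2l.
      lra.
    by apply: ltnW; rewrite -(ltr_nat R).
  rewrite /f /A_b.
  apply: (@le_trans _ _ (expeR ((sc * (2 * (delta * n%:R)))%:E))).
    rewrite lee_expeR (EFinM sc); apply: lee_wpmul2l; first by rewrite lee_fin ltW.
    by rewrite (EFinM 2); apply: lee_wpmul2l => //; rewrite lee_fin.
  rewrite /= lee_fin.
  have -> : sc * (2 * (delta * n%:R)) = ka * n%:R.
    rewrite /sc /ka; field; exact: lt0r_neq0.
  by [].
have fh : forall w, (f w <= h w)%E.
  move=> w; case: (pselect (forall n, F n w)) => [allF|].
    by rewrite H2 // leey.
  move=> /existsNP [n nF]; elim: n nF => [|n IH] nF.
    by exfalso; apply: nF; left; exact: H4.
  case: (pselect (F n w)) => [Fn|Fn]; last exact: IH.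
  apply: le_trans (H1 w n Fn).
  apply: H3 => [Nw|En]; apply: nF; [right|left] => //.
have Hle : (\int[P]_w f w <= \int[P]_w h w)%E.
  by apply: int_mono => // w; exact: expeR_ge0.
apply: le_lt_trans Hle _.
rewrite /h integral_nneseries //; last first.
  move=> n; apply/measurable_realfun.measurable_EFinP.
  apply: measurable_realfun.measurable_funM; first exact: measurable_cst.
  exact: measurable_realfun.measurable_indic.
pose a := C * expR ka.
pose z := expR (- ka).
have z0 : 0 <= z by rewrite expR_ge0.
have z1 : z < 1 by rewrite /z expR_lt1 oppr_lt0.
apply: (@le_lt_trans _ _ (\sum_(n <oo) ((geometric a z n)%:E))%E); last first.
  apply: (@le_lt_trans _ _ (a / (1 - z))%:E); last exact: ltry.
  apply: lime_le.
    by apply: is_cvg_nneseries => m _ _; rewrite lee_fin geometric_ge0 // mulr_ge0 ?expR_ge0 // ltW.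
  apply: nearW => k; rewrite sumEFin lee_fin.
  have -> : \sum_(0 <= i < k) geometric a z i = series (geometric a z) k by [].
  rewrite geometric_seriesE ?lt_eqF //=.
  rewrite ler_pM2r ?invr_gt0 ?subr_gt0 //.
  rewrite mulrBr mulr1 lerBlDr lerDl mulr_ge0 ?exprn_ge0 // mulr_ge0 ?expR_ge0 // ltW //.
apply: lee_nneseries.
  by move=> n _ _; apply: integral_ge0 => w _; exact: term0.
move=> n _.
rewrite (integralZl_indic _ (fun _ => F n)) //; last first.
  by move=> /ltW; rewrite leNgt expR_gt0.
rewrite integral_indic // setIT.
apply: le_trans (_ : (kk n)%:E * (C * expR (- (c1 * n%:R)))%:E <= _)%E.
  by apply: lee_wpmul2l; [rewrite lee_fin expR_ge0 | exact: PF].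
rewrite -EFinM lee_fin /geometric /a /z /kk.
have -> : [sequence C * expR ka * expR (- ka) ^+ n0]_n0 n = C * expR ka * expR (- ka) ^+ n by [].
rewrite -expRM_natr mulrCA -mulrA -!expRD.
have -> : ka * n.+1%:R + - (c1 * n%:R) = ka + - ka * n%:R.
  by rewrite /ka -addn1 natrD; field.
by [].
Qed.
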